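(* Let $1\le j<n$ with $\gcd(n,j)=1$ and $k=n-j$. Let $\phi$ be the Drinfeld module over $L$ with $\phi_T=-\tau^n+g\tau^j+1$ ($g\in L$), and let $\lambda=\tau^k-a$ with $a\in L^\times$. Then there exists a Drinfeld $A$-module $\psi$ of characteristic $T-1$ over $L$ such that $\lambda$ is an isogeny from $\phi$ to $\psi$ if and only if $$\frac{1}{a}\,g^{q^k}-\frac{1}{a^{q^j}}\,g-a^{q^n-1}+1=0 .$$ In that case $\psi_T=-\tau^n+h\tau^j+1$ with $h=-a^{q^n}+a+g^{q^k}$.
   Context: $q$ is a prime power, $A=\mathbb{F}_q[T]$, $L$ is a field containing $\mathbb{F}_q$ with an $\mathbb{F}_q$-algebra homomorphism $\iota:A\to L$ whose kernel is $(T-1)$ (so $\iota(T)=1$). $L\{\tau\}$ is the twisted polynomial ring of additive polynomials over $L$, with $\tau$ the $q$-Frobenius, so $\tau c=c^q\tau$ for $c\in L$; for $f=a_0+a_1\tau+\dots$ set $D(f)=a_0$. A Drinfeld $A$-module of characteristic $T-1$ over $L$ is an $\mathbb{F}_q$-algebra homomorphism $\phi:A\to L\{\tau\}$, $a\mapsto\phi_a$, with $D\circ\phi=\iota$ and $\phi_a\ne\iota(a)$ for some $a$; it is determined by $\phi_T$. An isogeny $\lambda:\phi\to\psi$ over $L$ is $\lambda\in L\{\tau\}$ with $\lambda\phi_a=\psi_a\lambda$ for all $a\in A$ (equivalently for $a=T$). *)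

(* Defs.v *)
From HB Require Import structures.
From mathcomp Require Import all_boot all_order all_algebra.
Set Implicit Arguments. Unset Strict Implicit. Unset Printing Implicit Defensive.
Import GRing.Theory.
Local Open Scope ring_scope.

(* The twisted polynomial ring L{tau} (tau = q-Frobenius, tau c = c^q tau).
   An element  f = a_0 + a_1 tau + ... + a_m tau^m  is represented by the
   coefficient polynomial  a_0 + a_1 X + ... + a_m X^m : {poly L}.
   Addition, zero, scalars c = c%:P and tau^n = 'X^n are the usual ones;
   the (non-commutative) product is the twisted product below:
     (f * g)_n = \sum_{i+l=n} f_i * (g_l)^(q^i). *)
Definition skew_mul (L : fieldType) (q : nat) (f g : {poly L}) : {poly L} :=
  \poly_(n < size f + size g)
     \sum_(i < n.+1) f`_i * (g`_(n - i)) ^+ (q ^ i).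

Definition skewD (L : fieldType) (f : {poly L}) : L := f`_0.

(* F_q is contained in L: X^q - X has q distinct roots in L. *)
Definition contains_Fq (L : fieldType) (q : nat) : Prop :=
  exists s : seq L, [/\ uniq s, size s = q & all (fun x => x ^+ q == x) s].

Definition char_prime_power (L : fieldType) (q : nat) : Prop :=
  exists p e : nat, [/\ prime p, p \in [pchar L], (0 < e)%N & q = (p ^ e)%N].

(* A Drinfeld A-module (A = F_q[T]) of characteristic T-1 over L, given by
   phi_T (an F_q-algebra hom A -> L{tau} is determined by phi_T).
   Conditions: D(phi_T) = iota(T) = 1, and phi_a <> iota(a) for some a,
   which is equivalent to phi_T <> 1. *)
Definition drinfeld_T (L : fieldType) (phiT : {poly L}) : Prop :=
  skewD phiT = 1 /\ phiT <> 1.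

Definition isogeny (L : fieldType) (q : nat) (phiT psiT lam : {poly L}) : Prop :=
  skew_mul q lam phiT = skew_mul q psiT lam.

(* Main.v *)
Require Import Defs.
From HB Require Import structures.
From mathcomp Require Import all_boot all_order all_algebra.
From mathcomp Require Import zify ring.
Import GRing.Theory.
Local Open Scope ring_scope.


Lemma coef_skew (L : fieldType) (q : nat) (f g : {poly L}) (m : nat) :
  (0 < q)%N ->
  (skew_mul q f g)`_m = \sum_(i < m.+1) f`_i * g`_(m - i) ^+ (q ^ i).
Proof.
move=> q0; rewrite /skew_mul coef_poly; case: ltnP => // Hm.
symmetry; apply: big1 => i _.
case: (ltnP i (size f)) => Hi.
  have Hs : (size g <= m - i)%N by move: Hm Hi; move: (nat_of_ord i) => ii; lia.
  rewrite (nth_default 0 Hs).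
  by rewrite expr0n expn_eq0 eqn0Ngt q0 /= mulr0.
by rewrite (nth_default 0 Hi) mul0r.
Qed.

Lemma sum_ind (L : fieldType) (N c : nat) (X : L) :
  \sum_(i < N) (if (i == c :> nat) then X else 0) = if (c < N)%N then X else 0.
Proof.
by rewrite -big_mkcond /= (big_ord1_eq _ (fun _ => X)).
Qed.

Lemma negpow (L : fieldType) (q : nat) (x : L) (i : nat) :
  char_prime_power L q -> (- x) ^+ (q ^ i) = - x ^+ (q ^ i).
Proof.
move=> [p [e [pp pc e0 ->]]].
case: (eqVneq p 2) pc => [->|p2] pc.
  by rewrite !(oppr_pchar2 pc).
have op : odd p.
  by case: (even_prime pp) => [/eqP|//]; rewrite (negbTE p2).
rewrite exprNn -signr_odd -expnM oddX op orbT /= expr1 mulN1r.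
by [].
Qed.

Lemma coef_mul_lam (L : fieldType) (q : nat) (f : {poly L}) (k m : nat) (a : L) :
  char_prime_power L q -> (0 < q)%N -> (1 <= k)%N ->
  (skew_mul q f ('X^k - a%:P))`_m =
    (if (k <= m)%N then f`_(m - k) else 0) - f`_m * a ^+ (q ^ m).
Proof.
move=> hq q0 k1; rewrite coef_skew //.
transitivity (\sum_(i < m.+1) ((if (i == (m - k)%N :> nat) then (if (k <= m)%N then f`_(m - k) else 0) else 0)
    + (if (i == m :> nat) then - (f`_m * a ^+ (q ^ m)) else 0))).
  apply: eq_bigr => i _; have Hi := ltn_ord i.
  rewrite coefB coefXn coefC; move: (nat_of_ord i) Hi => {}i Hi.
  case: (eqVneq (m - i)%N k) => [E|E].
    have Ei : i = (m - k)%N by lia.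
    have km : (k <= m)%N by lia.
    have Hf : (m - i == 0)%N = false by apply/eqP; lia.
    have Hf2 : (i == m) = false by apply/eqP; lia.
    by rewrite Ei eqxx km -Ei Hf Hf2 subr0 expr1n mulr1 addr0.
  move/eqP: E => E.
  have -> : (if i == (m - k)%N then (if (k <= m)%N then f`_(m - k) else 0) else 0) = 0.
    by case: eqP => [Ei|//]; case: (leqP k m) => km //=; exfalso; lia.
  case: (eqVneq i m) => [->|/eqP Eim].
    by rewrite subnn eqxx sub0r negpow // mulrN add0r.
  have -> : (m - i == 0)%N = false by apply/eqP; lia.
  by rewrite subrr expr0n expn_eq0 eqn0Ngt q0 /= mulr0 addr0.
rewrite big_split /= !sum_ind ltnSn.
have -> : (m - k < m.+1)%N by lia.
by [].
Qed.

Lemma coef_lam_mul (L : fieldType) (q : nat) (f : {poly L}) (k m : nat) (a : L) :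
  (0 < q)%N -> (1 <= k)%N ->
  (skew_mul q ('X^k - a%:P) f)`_m =
    (if (k <= m)%N then f`_(m - k) ^+ (q ^ k) else 0) - a * f`_m.
Proof.
move=> q0 k1; rewrite coef_skew //.
transitivity (\sum_(i < m.+1) ((if (i == k :> nat) then (if (k <= m)%N then f`_(m - k) ^+ (q ^ k) else 0) else 0)
    + (if (i == 0 :> nat) then - (a * f`_m) else 0))).
  apply: eq_bigr => i _; have Hi := ltn_ord i.
  rewrite coefB coefXn coefC; move: (nat_of_ord i) Hi => {}i Hi.
  case: (eqVneq i k) => [Eik|E].
    subst i.
    have km : (k <= m)%N by lia.
    have Hf : (k == 0)%N = false by apply/eqP; lia.
    by rewrite km Hf subr0 mul1r addr0.
  move/eqP: E => E.
  case: (eqVneq i 0%N) => [E0|/eqP E0].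
    subst i.
    by rewrite subn0 expn0 expr1 sub0r mulNr add0r.
  by rewrite /= subr0 mul0r addr0.
rewrite big_split /= !sum_ind.
have -> : (0 < m.+1)%N by [].
case: (leqP k m) => km.
  by have -> : (k < m.+1)%N by lia.
have -> : (k < m.+1)%N = false by apply/negbTE; rewrite -leqNgt; lia.
by [].
Qed.

Lemma coef_form (L : fieldType) (n j l : nat) (y : L) :
  (- 'X^n + y *: 'X^j + 1 : {poly L})`_l =
    - (l == n)%:R + y * (l == j)%:R + (l == 0)%:R.
Proof. by rewrite coefD coefD coefN coefZ !coefXn coef1. Qed.

Ltac clean := rewrite /= ?mulr0n ?mulr1n ?oppr0 ?mulr0 ?mulr1 ?add0r ?addr0.

Lemma pow_form (L : fieldType) (q n j k l : nat) (g : L) :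
  char_prime_power L q -> (0 < q)%N -> (1 <= j)%N -> (j < n)%N ->
  (- (l == n)%:R + g * (l == j)%:R + (l == 0)%:R) ^+ (q ^ k) =
   - (l == n)%:R + g ^+ (q ^ k) * (l == j)%:R + (l == 0)%:R.
Proof.
move=> hq q0 j1 jn.
have qk : (q ^ k != 0)%N by rewrite expn_eq0 eqn0Ngt q0.
case: (eqVneq l n) => [->|Hn].
  have -> : (n == j) = false by apply/eqP; lia.
  have -> : (n == 0)%N = false by apply/eqP; lia.
  by clean; rewrite negpow // expr1n.
case: (eqVneq l j) => [->|Hj].
  have -> : (j == 0)%N = false by apply/eqP; lia.
  by clean.
case: (eqVneq l 0%N) => [_|H0].
  by clean; rewrite expr1n.
by clean; rewrite expr0n (negbTE qk).
Qed.

Ltac fin := rewrite /= ?mulr0n ?mulr1n;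
  repeat match goal with |- context [ GRing.natmul 1 (nat_of_bool ?b) ] =>
    let u := fresh "u" in set u := GRing.natmul 1 (nat_of_bool b) end; ring.

Lemma keyK (L : fieldType) (q n j k m : nat) (g a : L) :
  (1 <= j)%N -> (j < n)%N -> k = (n - j)%N ->
  let g' := g ^+ (q ^ k) in
  let h := - a ^+ (q ^ n) + a + g' in
  let e := a * g - h * a ^+ (q ^ j) in
  let P y l := - (l == n)%:R + y * (l == j)%:R + (l == 0)%:R in
  (if (k <= m)%N then P h (m - k)%N else 0) - P h m * a ^+ (q ^ m) =
  (if (k <= m)%N then P g' (m - k)%N else 0) - a * P g m + (m == j)%:R * e.
Proof.
move=> j1 jn hk g' h e P; rewrite /P /e /h.
case: (leqP k m) => km.
  have -> : ((m - k)%N == j) = (m == n) by apply/eqP/eqP; lia.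
  have -> : (m == 0)%N = false by apply/eqP; lia.
  case: (eqVneq m n) => [->|Hn].
    have -> : (n == j) = false by apply/eqP; lia.
    fin.
  case: (eqVneq m j) => [->|Hj].
    fin.
  fin.
have -> : (m == n) = false by apply/eqP; lia.
case: (eqVneq m j) => [->|Hj].
  have -> : (j == 0)%N = false by apply/eqP; lia.
  fin.
case: (eqVneq m 0%N) => [->|H0].
  rewrite expn0 expr1; fin.
fin.
Qed.

Lemma zeroZ {L : fieldType} {q j k : nat} {a c : L} {d : {poly L}} :
  a != 0 -> (1 <= k)%N ->
  (forall m, (if (k <= m)%N then d`_(m - k) else 0) - d`_m * a ^+ (q ^ m)
             = (m == j)%:R * c) -> d = 0.
Proof.
move=> a0 k1 H.
have low : forall m, (m < j)%N -> d`_m = 0.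
  elim/ltn_ind => m IH mj.
  have := H m; have -> : (m == j) = false by apply/eqP; lia.
  rewrite mul0r.
  have -> : (if (k <= m)%N then d`_(m - k) else 0) = 0.
    case: (leqP k m) => km //; apply: IH; lia.
  rewrite sub0r => /eqP; rewrite oppr_eq0 mulf_eq0 (negbTE (expf_neq0 _ a0)) orbF.
  by move/eqP.
apply/eqP; apply: contraT => dn0.
have sz : (0 < size d)%N by rewrite size_poly_gt0.
have lc : d`_(size d).-1 != 0 by rewrite -/(lead_coef d) lead_coef_eq0.
have := H ((size d).-1 + k)%N.
have -> : (k <= (size d).-1 + k)%N by lia.
have -> : ((size d).-1 + k - k)%N = (size d).-1 by lia.
rewrite (nth_default 0 (_ : (size d <= (size d).-1 + k)%N)); last by lia.
rewrite mul0r subr0.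
case: (eqVneq ((size d).-1 + k)%N j) => [E|/eqP E].
  by rewrite low in lc; [rewrite eqxx in lc | lia].
by rewrite mul0r => E'; rewrite E' eqxx in lc.
Qed.

Theorem proposition4p1 (L : fieldType) (q : nat)
  (hq : char_prime_power L q) (hFq : contains_Fq L q)
  (n j k : nat) (hj1 : (1 <= j)%N) (hjn : (j < n)%N) (hcop : coprime n j)
  (hk : k = (n - j)%N) (g a : L) (ha : a != 0) :
  let phiT : {poly L} := - 'X^n + g *: 'X^j + 1 in
  let lam : {poly L} := 'X^k - a%:P in
  ((exists psiT : {poly L}, drinfeld_T psiT /\ isogeny q phiT psiT lam) <->
     g ^+ (q ^ k) / a - g / a ^+ (q ^ j) - a ^+ (q ^ n - 1) + 1 = 0)
  /\ (forall psiT : {poly L}, drinfeld_T psiT -> isogeny q phiT psiT lam ->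
        psiT = - 'X^n + (- a ^+ (q ^ n) + a + g ^+ (q ^ k)) *: 'X^j + 1).
Proof.
move=> phiT lam.
have q0 : (0 < q)%N by case: hq => p [e [pp _ _ ->]]; rewrite expn_gt0 prime_gt0.
have k1 : (1 <= k)%N by lia.
set h := - a ^+ (q ^ n) + a + g ^+ (q ^ k).
set psi0 : {poly L} := - 'X^n + h *: 'X^j + 1.
set e := a * g - h * a ^+ (q ^ j).
have Key : forall m, (skew_mul q psi0 lam)`_m = (skew_mul q lam phiT)`_m + (m == j)%:R * e.
  move=> m; rewrite /lam coef_mul_lam // coef_lam_mul // /psi0 /phiT !coef_form.
  rewrite pow_form //.
  exact: (keyK _ q _ _ _ m g a hj1 hjn hk).
have Uniq : forall psiT, isogeny q phiT psiT lam -> psiT = psi0 /\ e = 0.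
  move=> psiT iso.
  have Hd : forall m, (if (k <= m)%N then (psiT - psi0)`_(m - k) else 0)
             - (psiT - psi0)`_m * a ^+ (q ^ m) = (m == j)%:R * (- e).
    move=> m; have := Key m; rewrite iso /lam !coef_mul_lam // => Km.
    have E : forall x y z w : L, x - y = z - w + (m == j)%:R * e ->
      (x - y) - (z - w) = (m == j)%:R * e by move=> x y z w ->; ring.
    move: (E _ _ _ _ Km); rewrite !coefB.
    case: (k <= m)%N => H; rewrite mulrN -H; ring.
  have d0 := zeroZ (q:=q) (j:=j) ha k1 Hd.
  split; first by apply/eqP; rewrite -subr_eq0 d0.
  have := Hd j; rewrite d0 !coef0 eqxx mul0r.
  case: (k <= j)%N; rewrite subr0 /= mul1r => /esym/eqP; rewrite oppr_eq0 => /eqP //.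
have Dpsi0 : drinfeld_T psi0.
  split. rewrite /skewD /psi0 coef_form.
    have -> : (0%N == n) = false by apply/eqP; lia.
    have -> : (0%N == j) = false by apply/eqP; lia.
    by rewrite /= ?mulr0n ?mulr1n oppr0 mulr0 !add0r.
  move/(congr1 (fun p : {poly L} => p`_n)); rewrite /psi0 coef_form coef1.
  have -> : (n == j) = false by apply/eqP; lia.
  have -> : (n == 0)%N = false by apply/eqP; lia.
  rewrite eqxx /= ?mulr0n ?mulr1n mulr0 !addr0 => /eqP; rewrite oppr_eq0 oner_eq0 //.
have Hqn : (1 <= q ^ n)%N by rewrite expn_gt0 q0.
have aqj : a ^+ (q ^ j) != 0 by rewrite expf_neq0.
have Cond : g ^+ (q ^ k) / a - g / a ^+ (q ^ j) - a ^+ (q ^ n - 1) + 1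
            = - e / (a * a ^+ (q ^ j)).
  rewrite (exprB Hqn) ?unitfE // expr1 /e /h; field.
  by rewrite aqj ha.
split; last by move=> psiT _ /Uniq [].
split.
  by move=> [psiT [_ /Uniq [_ E0]]]; rewrite Cond E0 oppr0 mul0r.
move=> C; exists psi0; split => //.
have e0 : e = 0.
  move: C; rewrite Cond => /eqP; rewrite mulf_eq0 invr_eq0 mulf_eq0 (negbTE ha) (negbTE aqj) orbF oppr_eq0.
  by rewrite orbF => /eqP.
rewrite /isogeny; apply/polyP => m.
by rewrite Key e0 mulr0 addr0.
Qed.
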